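(* For every $n$, let $C_n\subseteq\mathcal C(G'')$ be a discrete (multi-)set of pointed perturbed diamonds with parameter $n$ (i.e. elements of the form $(D_n(x''),x'')$). Assume that for every $T<\infty$, $\lim_n |C_n\cap A_{n,T}|=0$. Then every subsequential limit of $(C_n)_n$ in $\mathcal C(G'')$ consists only of perturbed pointed horoballs of type II (possibly with infinite delay).
   Context: $G,G'$ are finitely generated groups with neutral elements $o,o'$, word metrics $d,d'$ from Cayley graphs with respect to finite generating sets, ball volumes $v_n,v'_n$, growth rates $a=\lim v_n^{1/n}>1$, $a'=\lim (v'_n)^{1/n}>1$, and $c:=\log a/\log a'$. $G''=G\times G'$ has origin $o''=(o,o')$ and metric $\rho_c((x,x'),(y,y'))=d(x,y)+d'(x',y')/c$. Fix a non-decreasing $f:\mathbb Z_{\ge0}\to\mathbb Z_{\ge0}$ and a strictly increasing sequence $(r_j)$ in $\mathbb Z_{\ge0}$ with $f(0)=0$, $r'_j:=f(r_j)$, $0<\inf_n v'_{r'_n}/v_{r_n}\le \sup_n v'_{r'_n}/v_{r_n}<\infty$ and $\forall m\,\exists N\,\forall n\ge N:|f(n+m)-f(n)-cm|\le1$. Perturbed diamond: $D_n(x''):=\bigcup_{t=0}^{r_n}\{(y,y'):d(x,y)=r_n-t,\ d'(x',y')\le f(t)\}$ for $x''=(x,x')$. Horocompactification $\overline{G''}$ of $(G'',\rho_c)$: with $\rho_{x''}(y'')=\rho_c(x'',y'')-\rho_c(x'',o'')$, the closure of $\{\rho_{x''}\}$ among $1$-Lipschitz functions vanishing at $o''$ under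 pointwise convergence; similarly $\overline G,\overline{G'}$ and boundaries $\partial G=\overline G\setminus G$, $\partial G'$. For $\theta\in\partial G$, $\theta'\in\partial G'$, $(\theta,\theta')\in\partial G''$ is the function $(y,y')\mapsto d_\theta(y)+d_{\theta'}(y')/c$. $\mathcal C(G'')$ is the space of pairs $(B,\theta)$ with $B\subseteq G''$ nonempty and $\theta\in\overline{G''}$, with the product of the Fell topology (pointwise convergence of indicators) and the topology of $\overline{G''}$; a discrete set in $\mathcal C(G'')$ is a multiset such that each $y''\in G''$ lies in $B$ for only finitely many of its elements $(B,\theta)$, and convergence of discrete sets is vague convergence of the associated counting measures. A pointed perturbed diamond is $(D_n(x''),x'')$. $A_{n,T}$ is the set of pointed perturbed diamonds with parameter $n$ whose center $(x,x')$ satisfies either ($d(o,x)<r_n+T$ and $d'(o',x')<T$) or ($d'(o',x')<r'_n+T$ and $d(o,x)<T$). A perturbed pointed horoball of type II is a pointed set $(B,\theta'')$ which is a limit in $\mathcal C(G'')$ of pointed perturbed diamonds $(D_{n_k}(x''_k),x''_k)$ (along parameters $n_k\to\infty$) with centers $x''_k=(x_k,x'_k)$ satisfying $d(x_k,o)\to\infty$ and $d'(x'_k,o')\to\infty$ (then $\theta''\in\partial G\times\partial G'$); additionally $(G'',\theta'')$ for any $\theta''\in\partial G\times\partial G'$ counts as a perturbed pointed horoball of type II with infinite delay. *)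

(* Defs.v *)
From mathcomp Require Import all_boot all_order all_algebra.
From mathcomp Require Import monoid.
From Stdlib Require List.
From mathcomp Require Import all_classical all_reals all_analysis.

Set Implicit Arguments.
Unset Strict Implicit.
Unset Printing Implicit Defensive.

Import Order.TTheory GRing.Theory Num.Theory.
Import numFieldNormedType.Exports.
Local Open Scope classical_set_scope.
Local Open Scope ring_scope.

Definition word_prod (G : groupType) (w : seq G) : G :=
  foldr (fun s acc => monoid.mul s acc) monoid.one w.

Definition word_in (G : groupType) (S : seq G) (w : seq G) : Prop :=
  forall s, List.In s w -> exists t, List.In t S /\ (s = t \/ s = monoid.inv t).

Definition is_word_metric (G : groupType) (S : seq G) (d : G -> G -> nat) : Prop :=
  forall x y n, (d x y <= n)%N <->
    exists w : seq G, (size w <= n)%N /\ word_in S w /\ y = monoid.mul x (word_prod w).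

Definition is_ball_volume (G : groupType) (d : G -> G -> nat) (v : nat -> nat) : Prop :=
  forall n : nat, ([set y | (d monoid.one y <= n)%N] #= `I_(v n))%card.

Definition growth_rate (R : realType) (v : nat -> nat) (a : R) : Prop :=
  (fun n : nat => ((v n)%:R : R) `^ (n%:R)^-1) @ \oo --> a.

Definition horo_fun (R : realType) (T : Type) (dist : T -> T -> R) (o x : T)
  : {ptws T -> R} := fun y => dist x y - dist x o.

Definition horo_compactification (R : realType) (T : Type) (dist : T -> T -> R) (o : T)
  : set {ptws T -> R} := closure (range (horo_fun dist o)).

Definition horo_boundary (R : realType) (T : Type) (dist : T -> T -> R) (o : T)
  : set {ptws T -> R} :=
  horo_compactification dist o `\` range (horo_fun dist o).

Definition rho_c (R : realType) (G G' : Type) (d : G -> G -> nat) (d' : G' -> G' -> nat)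
  (c : R) (p q : G * G') : R :=
  (d p.1 q.1)%:R + (d' p.2 q.2)%:R / c.

(* points of C(G''): (indicator of B, theta) with Fell (pointwise) topology
   times the pointwise topology on horofunctions *)
Definition Cpt (R : realType) (G G' : Type) : Type :=
  ({ptws (G * G')%type -> bool} * {ptws (G * G')%type -> R})%type.

Definition CG (R : realType) (G G' : groupType) (d : G -> G -> nat) (d' : G' -> G' -> nat)
  (c : R) : set (Cpt R G G') :=
  [set p : Cpt R G G' | (exists y, p.1 y) /\
           horo_compactification (rho_c d d' c) (monoid.one, monoid.one) p.2].

Definition in_diamond (G G' : Type) (d : G -> G -> nat) (d' : G' -> G' -> nat)
  (f : nat -> nat) (r : nat -> nat) (n : nat) (x y : G * G') : Prop :=
  exists t : nat, (t <= r n)%N /\ d x.1 y.1 = (r n - t)%N /\ (d' x.2 y.2 <= f t)%N.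

Definition pdiamond (R : realType) (G G' : groupType) (d : G -> G -> nat)
  (d' : G' -> G' -> nat) (c : R) (f r : nat -> nat) (n : nat) (x : G * G')
  : Cpt R G G' :=
  ((fun y => `[< in_diamond d d' f r n x y >]) : {ptws (G * G')%type -> bool},
   horo_fun (rho_c d d' c) (monoid.one, monoid.one) x).

(* A_{n,T}: pointed perturbed diamonds with parameter n and center close
   to one of the two "axes" *)
Definition A_set (R : realType) (G G' : groupType) (d : G -> G -> nat)
  (d' : G' -> G' -> nat) (c : R) (f r : nat -> nat) (n : nat) (T : R)
  : set (Cpt R G G') :=
  [set p : Cpt R G G' | exists x : G * G', p = pdiamond d d' c f r n x /\
     (((d monoid.one x.1)%:R < (r n)%:R + T /\ (d' monoid.one x.2)%:R < T) \/
      ((d' monoid.one x.2)%:R < (f (r n))%:R + T /\ (d monoid.one x.1)%:R < T))].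

Definition horoball_II (R : realType) (G G' : groupType) (d : G -> G -> nat)
  (d' : G' -> G' -> nat) (c : R) (f r : nat -> nat) (p : Cpt R G G') : Prop :=
  (CG d d' c p /\
   exists (nk : nat -> nat) (xk : nat -> (G * G')%type),
     (forall M : nat, \forall k \near \oo, (M <= nk k)%N) /\
     (forall M : nat, \forall k \near \oo, (M <= d (xk k).1 monoid.one)%N) /\
     (forall M : nat, \forall k \near \oo, (M <= d' (xk k).2 monoid.one)%N) /\
     (fun k => pdiamond d d' c f r (nk k) (xk k)) @ \oo --> p)
  \/
  (p.1 = (fun _ => true) /\
   exists (th : {ptws G -> R}) (th' : {ptws G' -> R}),
     horo_boundary (fun x y => (d x y)%:R) monoid.one th /\
     horo_boundary (fun x y => (d' x y)%:R) monoid.one th' /\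
     p.2 = (fun y => th y.1 + th' y.2 / c)).

(* a multiset is given by its multiplicity function m *)
Definition discrete_set (R : realType) (G G' : groupType) (d : G -> G -> nat)
  (d' : G' -> G' -> nat) (c : R) (m : Cpt R G G' -> nat) : Prop :=
  (forall p, (m p != 0)%N -> CG d d' c p) /\
  (forall y : G * G', finite_set [set p : Cpt R G G' | (m p != 0)%N /\ p.1 y]).

Definition count_integral (R : realType) (G G' : Type)
  (m : Cpt R G G' -> nat) (phi : Cpt R G G' -> R) : R :=
  \sum_(p \in [set p : Cpt R G G' | (m p != 0)%N]) (m p)%:R * phi p.

Definition Cc_fun (R : realType) (G G' : groupType) (d : G -> G -> nat)
  (d' : G' -> G' -> nat) (c : R) (phi : Cpt R G G' -> R) : Prop :=
  {within CG d d' c, continuous phi} /\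
  exists K : set (Cpt R G G'), K `<=` CG d d' c /\ compact K /\
    (forall p, CG d d' c p -> ~ K p -> phi p = 0).

Definition vague_cvg (R : realType) (G G' : groupType) (d : G -> G -> nat)
  (d' : G' -> G' -> nat) (c : R) (ms : nat -> Cpt R G G' -> nat)
  (m : Cpt R G G' -> nat) : Prop :=
  forall phi, Cc_fun d d' c phi ->
    (fun k => count_integral (ms k) phi) @ \oo --> count_integral m phi.

(* Main.v *)
Require Import Defs.
From mathcomp Require Import all_boot all_order all_algebra.
From mathcomp Require Import monoid.
From mathcomp Require Import all_classical all_reals all_analysis.
From mathcomp Require Import lra zify.
From Stdlib Require Import Lia.
Import Order.TTheory GRing.Theory Num.Theory.
Import numFieldNormedType.Exports.
Local Open Scope classical_set_scope.
Local Open Scope ring_scope.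
Set Implicit Arguments.
Unset Strict Implicit.
Unset Printing Implicit Defensive.

Section Metric.
Variables (G : groupType) (S : seq G) (d : G -> G -> nat).
Hypothesis Hd : is_word_metric S d.

Lemma word_prod_cat (w1 w2 : seq G) :
  word_prod (w1 ++ w2) = monoid.mul (word_prod w1) (word_prod w2).
Proof.
elim: w1 => [|s w IH] /=; first by rewrite mul1g.
by rewrite IH mulgA.
Qed.

Lemma word_in_cat w1 w2 : word_in S w1 -> word_in S w2 -> word_in S (w1 ++ w2).
Proof.
move=> h1 h2 s /List.in_app_iff [] ?; [exact: h1|exact: h2].
Qed.

Lemma dxx x : d x x = 0%N.
Proof.
apply/eqP; rewrite -leqn0; apply/(Hd x x 0).
exists [::]; split => //; split; first by move=> s [].
by rewrite /= mulg1.
Qed.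

Lemma dtri x y z : (d x z <= d x y + d y z)%N.
Proof.
have [w1 [s1 [i1 e1]]] := (proj1 (Hd x y (d x y))) (leqnn _).
have [w2 [s2 [i2 e2]]] := (proj1 (Hd y z (d y z))) (leqnn _).
apply/Hd; exists (w1 ++ w2); split; first by rewrite size_cat leq_add.
split; first exact: word_in_cat.
by rewrite word_prod_cat mulgA -e1.
Qed.

Lemma word_inv w : word_in S w -> exists w', size w' = size w /\ word_in S w' /\
  word_prod w' = monoid.inv (word_prod w).
Proof.
elim: w => [|s w IH] hw /=.
  by exists [::]; split => //; split; [move=> ? []| rewrite invg1].
have [w' [e1 [i1 p1]]] : exists w', size w' = size w /\ word_in S w' /\
  word_prod w' = monoid.inv (word_prod w).
  by apply: IH => t ht; apply: hw; right.
exists (w' ++ [:: monoid.inv s]); split; first by rewrite size_cat e1 addn1.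
split.
  apply: word_in_cat => // t [<-|[]].
  have [u [hu [->|->]]] := hw s (or_introl erefl); exists u; split => //.
    by right.
  by left; rewrite invgK.
by rewrite word_prod_cat p1 /= mulg1 invgM.
Qed.

Lemma dsym x y : d x y = d y x.
Proof.
suff H : forall x y, (d y x <= d x y)%N by apply/eqP; rewrite eqn_leq !H.
move=> {}x {}y.
have [w [s1 [i1 e1]]] := (proj1 (Hd x y (d x y))) (leqnn _).
have [w' [s' [i' p']]] := @word_inv w i1.
apply/Hd; exists w'; split; first by rewrite s'.
split => //; by rewrite p' e1 mulgK.
Qed.

Lemma ball_finite (v : nat -> nat) : is_ball_volume d v ->
  forall n, finite_set [set y | (d monoid.one y <= n)%N].
Proof. by move=> Hv n; apply/finite_setP; exists (v n); apply: Hv. Qed.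

End Metric.
Lemma ptws_cvg (I : Type) (V : topologicalType) (F : set_system {ptws I -> V})
  (f : {ptws I -> V}) {FF : Filter F} :
  (forall i, (fun g => g i) @ F --> f i) -> F --> f.
Proof.
move=> H; apply/cvg_sup => i; apply/cvg_image => //.
  by apply/seteqP; split => // v _; exists (fun=> v).
move=> A /H FA; exists [set g : {ptws I -> V} | A (g i)] => //.
by apply/seteqP; split => [v [g Ag <-]//|v Av]; exists (fun=> v).
Qed.
Lemma bool_fun_cont (T : topologicalType) (h : bool -> T) : continuous h.
Proof.
move=> b A /= hA.
have sub : [set b] `<=` h @^-1` A by move=> x /= ->; exact: nbhs_singleton.
exact: (@filterS bool (nbhs b) _ [set b] (h @^-1` A) sub (@discrete_set1 bool b)).
Qed.

Lemma fst_cont (T U : topologicalType) : continuous (@fst T U).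
Proof. move=> q; exact: cvg_fst. Qed.
Lemma snd_cont (T U : topologicalType) : continuous (@snd T U).
Proof. move=> q; exact: cvg_snd. Qed.

Lemma ev_cont (I : eqType) (V : topologicalType) (i : I) :
  continuous (fun g : {ptws I -> V} => g i).
Proof. exact: proj_continuous. Qed.

Lemma prod_cont (R : realType) (T : topologicalType) (fs : seq (T -> R)) :
  (forall f, f \in fs -> continuous f) ->
  continuous (fun q => \prod_(f <- fs) f q).
Proof.
elim: fs => [|f fs IH] H q.
  under eq_fun do rewrite big_nil. exact: cvg_cst.
under eq_fun do rewrite big_cons.
apply: (continuousM (s := f) (t := fun q => \prod_(f <- fs) f q)).
  by apply: H; rewrite mem_head.
by apply: IH => g gin; apply: H; rewrite in_cons gin orbT.
Qed.

Section Test.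
Variables (R : realType) (G G' : groupType).
Local Notation X := (G * G')%type.
Variable p : Cpt R G G'.
Variables (s : seq X) (eps : R).

Definition hbump (a t : R) : R := Num.max 0 (1 - `|t - a| / eps).

Lemma hbump_cont a : continuous (hbump a).
Proof.
move=> t; apply: (@continuous_max R R^o (fun=> 0) (fun t => 1 - `|t - a| / eps)).
  exact: cvg_cst.
apply: continuousB; first exact: cvg_cst.
apply: continuousM; last exact: cvg_cst.
apply: (@continuous_comp _ _ _ (fun t => t - a) Num.norm).
  by apply: continuousB; [exact: cvg_id| exact: cvg_cst].
exact: norm_continuous.
Qed.

Definition gfun (z : X) (q : Cpt R G G') : R :=
  (if q.1 z == p.1 z then 1 else 0) * hbump (p.2 z) (q.2 z).

Definition phi (q : Cpt R G G') : R := \prod_(z <- s) gfun z q.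

Lemma gfun_cont z : continuous (gfun z).
Proof.
move=> q.
apply: (continuousM (s := fun q : Cpt R G G' => if q.1 z == p.1 z then 1 else 0)
   (t := fun q : Cpt R G G' => hbump (p.2 z) (q.2 z))).
  apply: (@continuous_comp _ _ _ (fun q : Cpt R G G' => q.1 z)
     (fun b : bool => if b == p.1 z then 1 else 0 : R)); last exact: bool_fun_cont.
  apply: (@continuous_comp _ _ _ fst (fun g : {ptws X -> bool} => g z)).
    exact: fst_cont.
  exact: ev_cont.
apply: (@continuous_comp _ _ _ (fun q : Cpt R G G' => q.2 z) (hbump (p.2 z))).
  apply: (@continuous_comp _ _ _ snd (fun g : {ptws X -> R} => g z)).
    exact: snd_cont.
  exact: ev_cont.
exact: hbump_cont.
Qed.

Lemma phi_cont : continuous phi.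
Proof.
have := @prod_cont R (Cpt R G G') (map gfun s) _.
have -> : (fun q => \prod_(f <- map gfun s) f q) = phi.
  by apply: funext => q; rewrite /phi big_map.
apply; move=> f /mapP [z _ ->]; exact: gfun_cont.
Qed.

End Test.
Section Cpt.
Variables (R : realType) (G G' : groupType).
Local Notation X := (G * G')%type.

Lemma K1_compact (s : seq X) (b : X -> bool) :
  compact [set B : {ptws X -> bool} | forall z, z \in s -> B z = b z].
Proof.
have := @tychonoff X (fun _ => bool)
  (fun z => if z \in s then [set b z] else [set: bool]) _.
have -> : [set f : X -> bool | forall z, (if z \in s then [set b z] else [set: bool]) (f z)]
   = [set B : {ptws X -> bool} | forall z, z \in s -> B z = b z].
  apply/seteqP; split => f /= H z; first by move=> zs; have := H z; rewrite zs.
  by case: ifP => // zs; apply: H.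
apply => z; case: ifP => _; [exact: compact_set1 | exact: bool_compact].
Qed.

Lemma box_compact (m : X -> R) :
  compact [set h : {ptws X -> R} | forall z, `[- m z, m z]%classic (h z)].
Proof.
exact: (@tychonoff X (fun _ => R) (fun z => `[- m z, m z]%classic) (fun z => @segment_compact R _ _)).
Qed.

Lemma box_closed (m : X -> R) :
  closed [set h : {ptws X -> R} | forall z, `[- m z, m z]%classic (h z)].
Proof.
apply: compact_closed; last exact: box_compact.
apply: hausdorff_product => _; exact: Rhausdorff.
Qed.

End Cpt.
Section Rho.
Variables (R : realType) (G G' : groupType) (S : seq G) (S' : seq G').
Variables (d : G -> G -> nat) (d' : G' -> G' -> nat).
Hypotheses (Hd : is_word_metric S d) (Hd' : is_word_metric S' d').
Variable c : R.
Hypothesis c_gt0 : 0 < c.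
Local Notation X := (G * G')%type.
Local Notation rho := (rho_c d d' c).
Local Notation o := ((monoid.one, monoid.one) : X).

Lemma rho_sym x y : rho x y = rho y x.
Proof. by rewrite /rho_c (dsym Hd) (dsym Hd'). Qed.

Lemma rho_tri x y z : rho x z <= rho x y + rho y z.
Proof.
rewrite /rho_c addrACA lerD //; first by rewrite -natrD ler_nat (dtri Hd).
by rewrite -mulrDl ler_pM2r ?invr_gt0 // -natrD ler_nat (dtri Hd').
Qed.

Lemma horo_bound x z : `|horo_fun rho o x z| <= rho o z.
Proof.
have h1 := rho_tri x z o; have h2 := rho_tri x o z.
rewrite (rho_sym z o) in h1.
rewrite /horo_fun ler_norml; apply/andP; split; lra.
Qed.

Lemma horo_comp_box :
  horo_compactification rho o `<=`
  [set h : {ptws X -> R} | forall z, `[- rho o z, rho o z]%classic (h z)].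
Proof.
rewrite /horo_compactification.
rewrite [X in _ `<=` X](closure_id _).1; last exact: box_closed.
apply: closureS => _ [x _ <-] z /=.
by rewrite in_itv /= -ler_norml horo_bound.
Qed.

Lemma horo_comp_compact : compact (horo_compactification rho o).
Proof.
apply: (@subclosed_compact _ _
  [set h : {ptws X -> R} | forall z, `[- rho o z, rho o z]%classic (h z)]).
- exact: closed_closure.
- exact: (box_compact (m := fun z => rho o z)).
- exact: horo_comp_box.
Qed.

End Rho.
Section Props.
Variables (R : realType) (G G' : groupType) (S : seq G) (S' : seq G').
Variables (d : G -> G -> nat) (d' : G' -> G' -> nat).
Hypotheses (Hd : is_word_metric S d) (Hd' : is_word_metric S' d').
Variable c : R.
Hypothesis c_gt0 : 0 < c.
Local Notation X := (G * G')%type.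
Local Notation rho := (rho_c d d' c).
Local Notation o := ((monoid.one, monoid.one) : X).
Variables (p : Cpt R G G') (s : seq X) (eps : R).
Hypothesis eps_gt0 : 0 < eps.

Lemma hbump_ge0 a t : 0 <= hbump eps a t.
Proof. by rewrite /hbump le_max lexx. Qed.

Lemma gfun_ge0 z q : 0 <= gfun p eps z q.
Proof. by rewrite /gfun mulr_ge0 ?hbump_ge0 //; case: ifP. Qed.

Lemma phi_ge0 q : 0 <= phi p s eps q.
Proof. by rewrite /phi prodr_ge0 // => z _; apply: gfun_ge0. Qed.

Lemma phi_at_p : phi p s eps p = 1.
Proof.
rewrite /phi big1_seq // => z _.
by rewrite /gfun eqxx mul1r /hbump subrr normr0 mul0r subr0 max_r ?ler01.
Qed.

Lemma phi_neq0 q : phi p s eps q != 0 ->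
  forall z, z \in s -> q.1 z = p.1 z /\ `|q.2 z - p.2 z| < eps.
Proof.
move=> H z zs; have : gfun p eps z q != 0.
  apply: contraNneq H => g0; rewrite /phi.
  by apply/eqP; rewrite (big_rem z zs) /= g0 mul0r.
rewrite /gfun; case E: (q.1 z == p.1 z); last by rewrite mul0r eqxx.
move/eqP: E => e.
rewrite mul1r /hbump => hne; split => //.
move: hne; case: (ltP 0 (1 - `|q.2 z - p.2 z| / eps)) => h.
  by move=> _; move: h; rewrite subr_gt0 ltr_pdivrMr // mul1r.
by rewrite eqxx.
Qed.

Definition Kset := [set q : Cpt R G G' | (forall z, z \in s -> q.1 z = p.1 z) /\
   horo_compactification rho o q.2].

Lemma Kset_compact : compact Kset.
Proof.
have := compact_setX (K1_compact (s := s) (b := p.1)) (horo_comp_compact Hd Hd' c_gt0).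
by [].
Qed.

Lemma Kset_CG : (exists2 y0, y0 \in s & p.1 y0) -> Kset `<=` CG d d' c.
Proof.
move=> [y0 y0s py0] q [H1 H2]; split => //.
by exists y0; rewrite H1.
Qed.

Lemma phi_off q : CG d d' c q -> ~ Kset q -> phi p s eps q = 0.
Proof.
move=> [_ H2] nK; case: (eqVneq (phi p s eps q) 0) => // H; exfalso.
by apply: nK; split => // z zs; exact: (@phi_neq0 q H z zs).1.
Qed.

Lemma Cc_phi : (exists2 y0, y0 \in s & p.1 y0) -> Cc_fun d d' c (phi p s eps).
Proof.
move=> Hy; split; first exact/continuous_subspaceT/phi_cont.
exists Kset; split; first exact: Kset_CG.
split; first exact: Kset_compact.
exact: phi_off.
Qed.

End Props.
Lemma fsum_ge_term (R : realType) (I : choiceType) (P : set I) (F : I -> R) i :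
  finite_set (P `&` F @^-1` [set~ 0]) -> (forall j, P j -> 0 <= F j) -> P i ->
  F i <= \sum_(j \in P) F j.
Proof.
move=> fin ge0 Pi; case: (eqVneq (F i) 0) => [->|Fi0]; first exact: fsumr_ge0.
rewrite fsbig_supp (fsbigD1 i) //; last by split => //=; apply/eqP.
rewrite lerDl fsumr_ge0 // => j [[Pj _] _]; exact: ge0.
Qed.

Section Count.
Variables (R : realType) (G G' : groupType).
Local Notation X := (G * G')%type.

Lemma count_pos (m : Cpt R G G' -> nat) (ph : Cpt R G G' -> R) p (y0 : X) :
  finite_set [set q : Cpt R G G' | (m q != 0)%N /\ q.1 y0] ->
  (forall q, 0 <= ph q) -> (forall q, ph q != 0 -> q.1 y0) ->
  (m p != 0)%N -> 0 < ph p -> 0 < count_integral m ph.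
Proof.
move=> fin ge0 supp mp php.
apply: (@lt_le_trans _ _ ((m p)%:R * ph p)).
  by rewrite mulr_gt0 // ltr0n lt0n.
rewrite /count_integral; apply: (@fsum_ge_term R _ [set q | (m q != 0)%N] (fun q => (m q)%:R * ph q) p) => //.
- apply: sub_finite_set fin => q [/= mq /eqP]; rewrite mulf_eq0 negb_or => /andP[_ H].
  by split => //; apply: supp.
- by move=> q _; rewrite mulr_ge0.
Qed.

Lemma count_ex (m : Cpt R G G' -> nat) (ph : Cpt R G G' -> R) :
  count_integral m ph != 0 -> exists q, (m q != 0)%N /\ ph q != 0.
Proof.
move=> H; apply: contra_notP (negP H) => Hn; apply/eqP.
rewrite /count_integral fsbig1 // => q /= mq.
case: (eqVneq (ph q) 0) => [->|pq]; first by rewrite mulr0.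
by exfalso; apply: Hn; exists q.
Qed.

End Count.

Section Aset.
Variables (R : realType) (G G' : groupType).
Variables (d : G -> G -> nat) (d' : G' -> G' -> nat) (v v' : nat -> nat).
Hypotheses (Hv : is_ball_volume d v) (Hv' : is_ball_volume d' v').
Variables (c : R) (f r : nat -> nat).
Local Notation X := (G * G')%type.

Lemma A_finite n (j : nat) : finite_set (A_set d d' c f r n j%:R).
Proof.
pose N := (r n + f (r n) + j)%N.
apply: (@sub_finite_set _ _ ((pdiamond d d' c f r n) @`
   ([set y | (d monoid.one y <= N)%N] `*` [set y | (d' monoid.one y <= N)%N]))).
  move=> q [x [-> H]]; exists x => //; split => /=;
  case: H; rewrite -?natrD ?ltr_nat => -[h1 h2]; rewrite /N; lia.
apply: finite_image; apply: finite_setX; exact: ball_finite.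
Qed.

Lemma A_empty (C : Cpt R G G' -> nat) n (j : nat) :
  \sum_(q \in A_set d d' c f r n j%:R) ((C q)%:R : R) < 1 ->
  forall q, (C q != 0)%N -> ~ A_set d d' c f r n j%:R q.
Proof.
move=> Hs q Cq Aq.
have : ((C q)%:R : R) <= \sum_(q \in A_set d d' c f r n j%:R) ((C q)%:R : R).
  apply: (@fsum_ge_term R _ (A_set d d' c f r n j%:R) (fun q => ((C q)%:R : R)) q) => //.
  by apply: sub_finite_set (A_finite n j) => ? [].
move/le_lt_trans => /(_ _ Hs); rewrite ltrn1; lia.
Qed.

End Aset.

Lemma near_comp (P : nat -> Prop) (g : nat -> nat) :
  (\forall n \near \oo, P n) -> (forall k, (k <= g k)%N) -> \forall k \near \oo, P (g k).
Proof.
move=> [N _ HN] hg; exists N => // k /= Nk; apply: HN; exact: leq_trans Nk (hg k).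
Qed.

Lemma homo_ge (g : nat -> nat) : {homo g : m n / (m < n)%N} -> forall k, (k <= g k)%N.
Proof.
move=> hg; elim => [|k IH] //; apply: leq_ltn_trans IH _; exact: hg.
Qed.

Unset Implicit Arguments.
Set Strict Implicit.

Theorem lemma3p5
  (R : realType) (G G' : groupType)
  (S : seq G) (S' : seq G')
  (d : G -> G -> nat) (d' : G' -> G' -> nat)
  (Hd : is_word_metric S d) (Hd' : is_word_metric S' d')
  (v v' : nat -> nat)
  (Hv : is_ball_volume d v) (Hv' : is_ball_volume d' v')
  (a a' : R)
  (Ha : growth_rate v a) (Ha' : growth_rate v' a')
  (Ha1 : 1 < a) (Ha1' : 1 < a')
  (c : R) (Hc : c = ln a / ln a')
  (f : nat -> nat) (Hfmono : {homo f : m n / (m <= n)%N}) (Hf0 : f 0%N = 0%N)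
  (r : nat -> nat) (Hr : {homo r : m n / (m < n)%N})
  (Hratio : exists k1 k2 : R, 0 < k1 /\
      forall n : nat, k1 <= (v' (f (r n)))%:R / (v (r n))%:R <= k2)
  (Hfc : forall m : nat, exists N : nat, forall n : nat, (N <= n)%N ->
      `|(f (n + m)%N)%:R - (f n)%:R - c * m%:R| <= 1)
  (C : nat -> Cpt R G G' -> nat)
  (HCdisc : forall n, discrete_set d d' c (C n))
  (HCdiam : forall n p, (C n p != 0)%N -> exists x : G * G', p = pdiamond d d' c f r n x)
  (HA : forall T : R,
      (fun n => \sum_(p \in A_set d d' c f r n T) ((C n p)%:R : R)) @ \oo --> 0) :
  forall (nk : nat -> nat) (Cl : Cpt R G G' -> nat),
    {homo nk : m n / (m < n)%N} ->
    discrete_set d d' c Cl ->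
    vague_cvg d d' c (fun k => C (nk k)) Cl ->
    forall p, (Cl p != 0)%N -> horoball_II d d' c f r p.
Proof.
move=> nk Cl Hnk HCl Hvague p Clp.
have c_gt0 : 0 < c by rewrite Hc divr_gt0 // ln_gt0.
have CGp : CG d d' c p := HCl.1 p Clp.
have [y0 py0] := CGp.1.
left; split => //.
pose D0 := maxn (d monoid.one y0.1) (d' monoid.one y0.2).
pose B j := [set z : G * G' | (d monoid.one z.1 <= j)%N /\ (d' monoid.one z.2 <= j)%N].
have Bfin j : finite_set (B j).
  exact: (finite_setX (ball_finite Hv j) (ball_finite Hv' j)).
pose s j : seq (G * G') := y0 :: finmap.enum_fset (fset_set (B j)).
have sy0 j : y0 \in s j by rewrite mem_head.
have sB j z : B j z -> z \in s j.
  by move=> Bz; rewrite in_cons; apply/orP; right; rewrite in_fset_set // inE.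
pose eps j : R := (j.+1%:R)^-1.
have eps_gt0 j : 0 < eps j by rewrite invr_gt0 ltr0n.
pose phj j := phi p (s j) (eps j).
have phj_y0 j q : phj j q != 0 -> q.1 y0.
  by move=> H; rewrite (phi_neq0 (eps_gt0 j) H (sy0 j)).1.
have key j : exists kx : nat * (G * G'),
   [/\ (j <= kx.1)%N, (C (nk kx.1) (pdiamond d d' c f r (nk kx.1) kx.2) != 0)%N,
       phj j (pdiamond d d' c f r (nk kx.1) kx.2) != 0 &
       ~ A_set d d' c f r (nk kx.1) j%:R (pdiamond d d' c f r (nk kx.1) kx.2)].
  have L : 0 < count_integral Cl (phj j).
    apply: (count_pos (p := p) (HCl.2 y0)) => //.
    - by move=> q; apply: phi_ge0.
    - by move=> q; apply: phj_y0.
    - by rewrite /phj (phi_at_p p (s j) (eps j)); exact: ltr01.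
  have cv := Hvague (phj j) (Cc_phi Hd Hd' c_gt0 (eps_gt0 j) (ex_intro2 _ _ y0 (sy0 j) py0)).
  have ev1 : \forall k \near \oo, 0 < count_integral (C (nk k)) (phj j).
    by move: L; apply: cvgr_gt.
  have ev2 : \forall k \near \oo,
      \sum_(q \in A_set d d' c f r (nk k) j%:R) ((C (nk k) q)%:R : R) < 1.
    apply: (near_comp (P := fun n => \sum_(q \in A_set d d' c f r n j%:R) ((C n q)%:R : R) < 1)); last exact: homo_ge.
    by move: (@ltr01 R); apply: cvgr_lt; exact: HA.
  have [k [[h1 h2] h3]] := filter_ex (filterI (filterI ev1 ev2) (nbhs_infty_ge j)).
  have [q [Cq phq]] := count_ex (lt0r_neq0 h1).
  have [x ex] := HCdiam _ _ Cq; subst q.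
  exists (k, x); split => //=.
  exact: (A_empty Hv Hv' (C := C (nk k)) h2 Cq).
have [kx Hkx] := choice key.
pose q j := pdiamond d d' c f r (nk (kx j).1) (kx j).2.
have hq j z : z \in s j -> (q j).1 z = p.1 z /\ `|(q j).2 z - p.2 z| < eps j.
  by case: (Hkx j) => _ _ H _; apply: (phi_neq0 (eps_gt0 j) H).
exists (fun j => nk (kx j).1), (fun j => (kx j).2).
split.
  move=> M; exists M => // j /= Mj.
  case: (Hkx j) => h _ _ _; apply: leq_trans Mj (leq_trans h _); exact: homo_ge.
have far j : (D0 < j)%N ->
    (j <= d monoid.one (kx j).2.1)%N /\ (j <= d' monoid.one (kx j).2.2)%N.
  move=> D0j; case: (Hkx j) => _ _ _ nA.
  have : (q j).1 y0 by rewrite (hq j y0 (sy0 j)).1.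
  rewrite /q /pdiamond /= => /asboolP [t [ht [e1 e2]]].
  have ft : (f t <= f (r (nk (kx j).1)))%N := Hfmono _ _ ht.
  have t1 := dtri Hd monoid.one y0.1 (kx j).2.1.
  rewrite (dsym Hd y0.1 (kx j).2.1) e1 in t1.
  have t2 := dtri Hd' monoid.one y0.2 (kx j).2.2.
  rewrite (dsym Hd' y0.2 (kx j).2.2) in t2.
  have nA' : ~ (((d monoid.one (kx j).2.1 < r (nk (kx j).1) + j)%N /\
                 (d' monoid.one (kx j).2.2 < j)%N) \/
                ((d' monoid.one (kx j).2.2 < f (r (nk (kx j).1)) + j)%N /\
                 (d monoid.one (kx j).2.1 < j)%N)).
    move=> H; apply: nA; exists (kx j).2; split => //.
    by rewrite -!natrD !ltr_nat.
  rewrite /D0 in D0j; lia.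
split.
  move=> M; exists (maxn M D0).+1 => // j /= Mj.
  rewrite (dsym Hd); have := far j; rewrite gtn_max in Mj; case/andP: Mj => h1 h2.
  case=> // h3 _; lia.
split.
  move=> M; exists (maxn M D0).+1 => // j /= Mj.
  rewrite (dsym Hd'); have := far j; rewrite gtn_max in Mj; case/andP: Mj => h1 h2.
  case=> // _ h3; lia.
have ev z : \forall j \near \oo, z \in s j.
  exists (maxn (d monoid.one z.1) (d' monoid.one z.2)) => // j /= h.
  by apply: sB; rewrite geq_max in h; case/andP: h.
have c1 : (fun j => (q j).1) @ \oo --> p.1.
  apply: ptws_cvg => z.
  apply: (@cvg_near_cst nat bool (p.1 z) (fun j => (q j).1 z) \oo _).
  by apply: filterS (ev z) => j jz; rewrite (hq j z jz).1.
have c2 : (fun j => (q j).2) @ \oo --> p.2.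
  apply: ptws_cvg => z.
  apply/(@cvgrPdist_lt _ R^o _ _ _ (fun j => (q j).2 z)) => e e0.
  have := near_infty_natSinv_lt (PosNum e0).
  move=> He; apply: filterS (filterI He (ev z)) => j [h1 h2].
  by rewrite distrC; apply: lt_trans (hq j z h2).2 _.
exact: (cvg_pair c1 c2).
Qed.
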